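(* Consider problem (P) and suppose $\bar x\in S$ is a weak local minimizer for (P). Then $F^{(1)}_-(\bar x;u)\ge 0$ for all $u\in\mathbb{R}^s$ (so $0\in\partial^{(1)}_- F(\bar x)$), and $F^{(2)}_-(\bar x;0;u)\ge 0$ for all $u\in\mathbb{R}^s$.
   Context: Problem (P): $C$-minimize $f(x)$ subject to $g(x)\in -K$, where $X\subset\mathbb{R}^s$ is open, $f:X\to\mathbb{R}^n$, $g:X\to\mathbb{R}^m$, and $C\subset\mathbb{R}^n$, $K\subset\mathbb{R}^m$ are closed convex cones with vertex at the origin; $C$ has nonempty interior and $C\ne\mathbb{R}^n$. Feasible set $S=\{x\in X: g(x)\in -K\}$. Positive polar of a cone $D$: $D^*=\{\lambda:\lambda\cdot y\ge 0\ \forall y\in D\}$. A feasible $\bar x$ is a weak local minimizer iff some neighborhood $N$ of $\bar x$ contains no $x\in S$ with $f(x)\in f(\bar x)-\operatorname{int}(C)$. $\Lambda=\{(\lambda,\mu): \lambda\in C^*,\ \mu\in K^*,\ \sum\lambda_i^2+\sum\mu_j^2=1\}$, $F(x)=\max\{\lambda\cdot[f(x)-f(\bar x)]+\mu\cdot g(x):(\lambda,\mu)\in\Lambda\}$. For $F$ at $\bar x$: $F^{(1)}_-(\bar x;u)=\liminf_{t\downarrow 0,\,u'\to u}t^{-1}[F(\bar x+tu')-F(\bar x)]$; $\partial^{(1)}_- F(\bar x)=\{x^*\text{ linear}: x^*(u)\le F^{(1)}_-(\bar x;u)\ \forall u\}$; and when $0\in\partial^{(1)}_-F(\bar x)$,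 $F^{(2)}_-(\bar x;0;u)=\liminf_{t\downarrow 0,\,u'\to u}2t^{-2}[F(\bar x+tu')-F(\bar x)]$. *)

(* Defs.v *)
From Stdlib Require Fin.
From Stdlib Require Import Reals Lra.
Open Scope R_scope.

Definition vec (n : nat) : Type := Fin.t n -> R.

Fixpoint vsum (n : nat) : (Fin.t n -> R) -> R :=
  match n with
  | O => fun _ => 0
  | S k => fun h => h Fin.F1 + vsum k (fun i => h (Fin.FS i))
  end.

Definition dot {n : nat} (x y : vec n) : R := vsum n (fun i => x i * y i).
Definition vadd {n : nat} (x y : vec n) : vec n := fun i => x i + y i.
Definition vsub {n : nat} (x y : vec n) : vec n := fun i => x i - y i.
Definition vopp {n : nat} (x : vec n) : vec n := fun i => - x i.
Definition vscal {n : nat} (a : R) (x : vec n) : vec n := fun i => a * x i.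
Definition vzero {n : nat} : vec n := fun _ => 0.
Definition vnorm {n : nat} (x : vec n) : R := sqrt (dot x x).

Definition is_open {n : nat} (X : vec n -> Prop) : Prop :=
  forall x, X x -> exists e, 0 < e /\ forall y, vnorm (vsub y x) < e -> X y.
Definition is_closed {n : nat} (C : vec n -> Prop) : Prop :=
  forall x, (forall e, 0 < e -> exists y, C y /\ vnorm (vsub y x) < e) -> C x.
Definition vinterior {n : nat} (C : vec n -> Prop) (x : vec n) : Prop :=
  exists e, 0 < e /\ forall y, vnorm (vsub y x) < e -> C y.

Definition is_closed_convex_cone {n : nat} (C : vec n -> Prop) : Prop :=
  is_closed C /\ C vzero /\
  (forall a x, 0 <= a -> C x -> C (vscal a x)) /\
  (forall x y, C x -> C y -> C (vadd x y)).

Definition polar {n : nat} (D : vec n -> Prop) (l : vec n) : Prop :=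
  forall y, D y -> dot l y >= 0.

Definition feasible {s m : nat} (X : vec s -> Prop) (g : vec s -> vec m)
  (K : vec m -> Prop) (x : vec s) : Prop := X x /\ K (vopp (g x)).

Definition weak_local_min {s n m : nat} (X : vec s -> Prop) (f : vec s -> vec n)
  (g : vec s -> vec m) (C : vec n -> Prop) (K : vec m -> Prop) (xbar : vec s) : Prop :=
  feasible X g K xbar /\
  exists d, 0 < d /\ forall x, vnorm (vsub x xbar) < d -> feasible X g K x ->
    ~ vinterior C (vsub (f xbar) (f x)).

Definition Lambda {n m : nat} (C : vec n -> Prop) (K : vec m -> Prop)
  (l : vec n) (mu : vec m) : Prop :=
  polar C l /\ polar K mu /\ dot l l + dot mu mu = 1.

Definition is_max (P : R -> Prop) (v : R) : Prop :=
  P v /\ forall w, P w -> w <= v.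

Definition is_F {s n m : nat} (X : vec s -> Prop) (f : vec s -> vec n)
  (g : vec s -> vec m) (C : vec n -> Prop) (K : vec m -> Prop) (xbar : vec s)
  (F : vec s -> R) : Prop :=
  forall x, X x ->
    is_max (fun r => exists l mu, Lambda C K l mu /\
                      r = dot l (vsub (f x) (f xbar)) + dot mu (g x)) (F x).

(** liminf_{t -> 0+, u' -> u} q t u' >= c  (liminf in the extended reals). *)
Definition liminf_ge {s : nat} (q : R -> vec s -> R) (u : vec s) (c : R) : Prop :=
  forall e, 0 < e -> exists d, 0 < d /\
    forall t u', 0 < t < d -> vnorm (vsub u' u) < d -> q t u' > c - e.

Definition dini1_quot {s : nat} (F : vec s -> R) (xbar : vec s) (t : R) (u' : vec s) : R :=
  (F (vadd xbar (vscal t u')) - F xbar) / t.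
Definition dini2_quot {s : nat} (F : vec s -> R) (xbar : vec s) (t : R) (u' : vec s) : R :=
  2 * (F (vadd xbar (vscal t u')) - F xbar) / (t * t).

Definition dini1_ge {s : nat} (F : vec s -> R) (xbar u : vec s) (c : R) : Prop :=
  liminf_ge (dini1_quot F xbar) u c.
Definition dini2_ge {s : nat} (F : vec s -> R) (xbar u : vec s) (c : R) : Prop :=
  liminf_ge (dini2_quot F xbar) u c.

Definition is_linear {s : nat} (L : vec s -> R) : Prop :=
  (forall u v, L (vadd u v) = L u + L v) /\ (forall a u, L (vscal a u) = a * L u).

Definition in_lower_subdiff1 {s : nat} (F : vec s -> R) (xbar : vec s) (L : vec s -> R) : Prop :=
  is_linear L /\ forall u, dini1_ge F xbar u (L u).

(* Main.v *)
Require Import Defs.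
From Stdlib Require Import Reals Lra Lia ZArith FunctionalExtensionality Classical ClassicalEpsilon.
Open Scope R_scope.

Lemma vsum_ext n (h1 h2 : Fin.t n -> R) : (forall i, h1 i = h2 i) -> vsum n h1 = vsum n h2.
Proof. induction n; simpl; intros H; auto. rewrite H. f_equal. apply IHn. intro; apply H. Qed.

Lemma vsum_lin3 n a b c (h1 h2 h3 : Fin.t n -> R) :
  vsum n (fun i => a * h1 i + b * h2 i + c * h3 i) = a * vsum n h1 + b * vsum n h2 + c * vsum n h3.
Proof. induction n; simpl. ring. rewrite (IHn (fun i => h1 (Fin.FS i)) (fun i => h2 (Fin.FS i)) (fun i => h3 (Fin.FS i))). ring. Qed.

Lemma vsum_le n (h1 h2 : Fin.t n -> R) : (forall i, h1 i <= h2 i) -> vsum n h1 <= vsum n h2.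
Proof. induction n; simpl; intros H. lra. specialize (IHn (fun i => h1 (Fin.FS i)) (fun i => h2 (Fin.FS i)) (fun i => H _)). specialize (H Fin.F1). lra. Qed.

Lemma vsum_zero n : vsum n (fun _ => 0) = 0.
Proof. induction n; simpl; auto. rewrite IHn; ring. Qed.

Lemma vsum_nonneg n (h : Fin.t n -> R) : (forall i, 0 <= h i) -> 0 <= vsum n h.
Proof. intro H. rewrite <- (vsum_zero n). apply vsum_le. auto. Qed.

Lemma vsum_coord n (h : Fin.t n -> R) : (forall i, 0 <= h i) -> forall j, h j <= vsum n h.
Proof.
  induction n; intros H j. inversion j.
  simpl. apply (Fin.caseS' j).
  - pose proof (vsum_nonneg n (fun i => h (Fin.FS i)) (fun i => H _)). lra.
  - intro p. pose proof (IHn (fun i => h (Fin.FS i)) (fun i => H _) p). pose proof (H Fin.F1). simpl in *. lra.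
Qed.

Lemma vsum_cv n (hk : nat -> Fin.t n -> R) (H : Fin.t n -> R) :
  (forall i, Un_cv (fun k => hk k i) (H i)) -> Un_cv (fun k => vsum n (hk k)) (vsum n H).
Proof.
  induction n; intros Hc; simpl.
  - intros e He. exists 0%nat. intros. unfold Rdist. rewrite Rminus_diag, Rabs_R0. lra.
  - apply CV_plus. apply Hc. apply (IHn (fun k i => hk k (Fin.FS i)) (fun i => H (Fin.FS i))). intro; apply Hc.
Qed.

Lemma cv_const (c : R) : Un_cv (fun _ => c) c.
Proof. intros e He. exists 0%nat. intros. unfold Rdist. rewrite Rminus_diag, Rabs_R0. lra. Qed.

Lemma nat_big x : exists N : nat, x < INR N.
Proof.
  destruct (archimed x) as [H1 _].
  destruct (Z_le_gt_dec 0 (up x)).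
  - exists (Z.to_nat (up x)). rewrite INR_IZR_INZ, Z2Nat.id; auto.
  - exists 0%nat. simpl. assert (up x < 0)%Z by lia. apply IZR_lt in H. lra.
Qed.

Lemma cv_ge (u : nat -> R) l c : Un_cv u l -> (forall k, c <= u k) -> c <= l.
Proof.
  intros Hu Hc. destruct (Rle_lt_dec c l); auto.
  destruct (Hu (c - l)) as [N HN]; [lra|]. specialize (HN N (le_n _)). specialize (Hc N).
  unfold Rdist in HN. apply Rabs_def2 in HN. lra.
Qed.

Lemma cv_le (u : nat -> R) l c : Un_cv u l -> (forall k, u k < c + / (INR k + 1)) -> l <= c.
Proof.
  intros Hu Hc. destruct (Rle_lt_dec l c); auto.
  destruct (Hu ((l - c)/2)) as [N1 HN]; [lra|].
  destruct (nat_big (2 / (l - c))) as [N2 HN2].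
  set (k := (N1 + N2)%nat).
  specialize (HN k ltac:(lia)). specialize (Hc k). unfold Rdist in HN. apply Rabs_def2 in HN.
  assert (HkN : INR N2 <= INR k) by (apply le_INR; lia).
  assert (0 < INR k + 1) by (pose proof (pos_INR k); lra).
  assert (/ (INR k + 1) < (l - c)/2).
  { apply (Rmult_lt_reg_l (INR k + 1)); auto. rewrite Rinv_r by lra.
    assert (2/(l-c) * ((l-c)/2) = 1) by (field; lra).
    assert (0 < (l-c)/2) by lra.
    assert (2/(l-c) * ((l-c)/2) < (INR k + 1) * ((l-c)/2)) by (apply Rmult_lt_compat_r; lra). lra. }
  lra.
Qed.

Lemma inv_mono k N : (N <= k)%nat -> / (INR k + 1) <= / (INR N + 1).
Proof. intro H. apply Rinv_le_contravar. pose proof (pos_INR N); lra. apply le_INR in H; lra. Qed.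

Lemma sep m (D : vec m -> Prop) (p : vec m) r :
  0 < r -> D vzero ->
  (forall a y, 0 <= a -> D y -> D (vscal a y)) ->
  (forall y z, D y -> D z -> D (vadd y z)) ->
  (forall y, D y -> r <= dot (vsub p y) (vsub p y)) ->
  exists mu, (forall y, D y -> 0 <= dot mu y) /\ dot mu p < 0.
Proof.
  intros Hr D0 Dsc Dadd Hb.
  set (E := fun x => exists y, D y /\ x = - dot (vsub p y) (vsub p y)).
  assert (HE : bound E).
  { exists (-r). intros x [y [Hy ->]]. specialize (Hb y Hy). lra. }
  assert (HE' : exists x, E x) by (exists (- dot (vsub p vzero) (vsub p vzero)); exists vzero; auto).
  destruct (completeness E HE HE') as [M [HM1 HM2]].
  set (delta := - M).
  assert (Hd1 : forall y, D y -> delta <= dot (vsub p y) (vsub p y)).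
  { intros y Hy. assert (E (- dot (vsub p y) (vsub p y))) by (exists y; auto).
    specialize (HM1 _ H). unfold delta; lra. }
  assert (Hdr : r <= delta).
  { assert (M <= -r). { apply HM2. intros x [y [Hy ->]]. specialize (Hb y Hy). lra. } unfold delta; lra. }
  assert (Hd2 : forall eps, 0 < eps -> exists y, D y /\ dot (vsub p y) (vsub p y) < delta + eps).
  { intros eps He. apply NNPP. intro Hn.
    assert (M <= M - eps).
    { apply HM2. intros x [y [Hy ->]]. apply Rnot_lt_le. intro Hl. apply Hn. exists y. split; auto. unfold delta; lra. }
    lra. }
  assert (Hy : forall k : nat, exists y, D y /\ dot (vsub p y) (vsub p y) < delta + / (INR k + 1)).
  { intro k. apply Hd2. apply Rinv_0_lt_compat. pose proof (pos_INR k); lra. }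
  set (y := fun k => proj1_sig (constructive_indefinite_description _ (Hy k))).
  assert (HyD : forall k, D (y k)) by (intro k; exact (proj1 (proj2_sig (constructive_indefinite_description _ (Hy k))))).
  assert (Hyd : forall k, dot (vsub p (y k)) (vsub p (y k)) < delta + / (INR k + 1))
    by (intro k; exact (proj2 (proj2_sig (constructive_indefinite_description _ (Hy k))))).
  clearbody y.
  (* parallelogram *)
  assert (Hpar : forall k j, dot (vsub (y k) (y j)) (vsub (y k) (y j)) <= 2 * / (INR k + 1) + 2 * / (INR j + 1)).
  { intros k j.
    assert (Hmid : D (vscal (/2) (vadd (y k) (y j)))) by (apply Dsc; [lra | apply Dadd; auto]).
    specialize (Hd1 _ Hmid). pose proof (Hyd k). pose proof (Hyd j).
    assert (dot (vsub (y k) (y j)) (vsub (y k) (y j)) =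
      2 * dot (vsub p (y k)) (vsub p (y k)) + 2 * dot (vsub p (y j)) (vsub p (y j))
      + (-4) * dot (vsub p (vscal (/ 2) (vadd (y k) (y j)))) (vsub p (vscal (/ 2) (vadd (y k) (y j))))).
    { unfold dot. rewrite <- vsum_lin3. apply vsum_ext. intro i. unfold vsub, vscal, vadd. field. }
    lra. }
  assert (Hcau : forall i, Cauchy_crit (fun k => y k i)).
  { intros i eps He.
    destruct (nat_big (4 / (eps * eps))) as [N HN].
    exists N. intros k j Hk Hj. unfold Rdist.
    pose proof (Hpar k j).
    pose proof (vsum_coord m (fun i => vsub (y k) (y j) i * vsub (y k) (y j) i) (fun i => ltac:(nra)) i).
    unfold dot in H. simpl in H0. unfold vsub in H0.
    pose proof (inv_mono _ _ Hk). pose proof (inv_mono _ _ Hj).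
    assert (0 < INR N + 1) by (pose proof (pos_INR N); lra).
    assert (4 * / (INR N + 1) < eps * eps).
    { apply (Rmult_lt_reg_l (INR N + 1)); auto. rewrite <- Rmult_assoc, (Rmult_comm _ 4), Rmult_assoc, Rinv_r by lra.
      assert (4 / (eps*eps) * (eps * eps) = 4) by (field; lra).
      assert (0 < eps * eps) by nra. nra. }
    assert (Rsqr (Rabs (y k i - y j i)) < Rsqr eps).
    { rewrite <- Rsqr_abs. unfold Rsqr. unfold vsub in H. lra. }
    apply Rsqr_incrst_0 in H5; auto. apply Rabs_pos. lra. }
  set (z := fun i => proj1_sig (R_complete _ (Hcau i))).
  assert (Hz : forall i, Un_cv (fun k => y k i) (z i)) by (intro i; exact (proj2_sig (R_complete _ (Hcau i)))).
  clearbody z.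
  assert (Hcv : forall (a : vec m) al, Un_cv (fun k => vsum m (fun i => (a i + al * y k i) * (a i + al * y k i)))
                                          (vsum m (fun i => (a i + al * z i) * (a i + al * z i)))).
  { intros a al. apply (vsum_cv m (fun k i => (a i + al * y k i) * (a i + al * y k i))). intro i.
    apply CV_mult; apply CV_plus; try apply cv_const; apply CV_mult; try apply cv_const; apply Hz. }
  set (mu := vsub z p).
  assert (HA : dot mu mu = delta).
  { replace (dot mu mu) with (vsum m (fun i => (p i + -1 * z i) * (p i + -1 * z i))).
    2:{ unfold dot. apply vsum_ext. intro; unfold mu, vsub; ring. }
    apply Rle_antisym.
    - apply (cv_le (fun k => vsum m (fun i => (p i + -1 * y k i) * (p i + -1 * y k i)))).
      + apply Hcv.
      + intro k. specialize (Hyd k). unfold dot in Hyd. erewrite vsum_ext. apply Hyd. intro; unfold vsub; ring.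
    - apply (cv_ge _ _ _ (Hcv p (-1))). intro k. specialize (Hd1 _ (HyD k)). unfold dot in Hd1.
      erewrite vsum_ext. apply Hd1. intro; unfold vsub; ring.
  }
  assert (HB : forall w, D w -> 0 <= dot mu w).
  { intros w Hw.
    assert (Ht : forall t, 0 < t -> delta <= delta + 2 * t * dot mu w + t * t * dot w w).
    { intros t Ht.
      assert (delta <= vsum m (fun i => ((p i - t * w i) + -1 * z i) * ((p i - t * w i) + -1 * z i))).
      { apply (cv_ge _ _ _ (Hcv (fun i => p i - t * w i) (-1))). intro k.
        assert (D (vadd (y k) (vscal t w))) by (apply Dadd; auto; apply Dsc; auto; lra).
        specialize (Hd1 _ H). unfold dot in Hd1. erewrite vsum_ext. apply Hd1. intro; unfold vsub, vadd, vscal; ring. }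
      replace (delta + 2 * t * dot mu w + t * t * dot w w) with
        (vsum m (fun i => ((p i - t * w i) + -1 * z i) * ((p i - t * w i) + -1 * z i))); auto.
      rewrite <- HA. replace (dot mu mu + 2 * t * dot mu w + t * t * dot w w) with
        (1 * dot mu mu + (2 * t) * dot mu w + (t * t) * dot w w) by ring.
      unfold dot. rewrite <- vsum_lin3. apply vsum_ext. intro; unfold mu, vsub; ring. }
    assert (0 <= dot w w) by (apply vsum_nonneg; intro; nra).
    destruct (Rle_lt_dec 0 (dot mu w)); auto.
    specialize (Ht (- dot mu w / (dot w w + 1))).
    assert (0 < - dot mu w / (dot w w + 1)) by (apply Rdiv_lt_0_compat; lra).
    specialize (Ht H0).
    set (a := dot mu w) in *. set (b := dot w w) in *.
    assert (- a / (b + 1) * b <= - a) .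
    { unfold Rdiv. rewrite Rmult_assoc. assert (/ (b+1) * b <= 1).
      { apply (Rmult_le_reg_l (b+1)); [lra|]. rewrite <- Rmult_assoc, Rinv_r by lra. lra. }
      nra. }
    nra. }
  assert (HC : dot mu z <= 0).
  { assert (Ht : forall s, 0 < s <= 1 -> delta <= delta - 2 * s * dot mu z + s * s * dot z z).
    { intros s Hs.
      assert (delta <= vsum m (fun i => (p i + -(1 - s) * z i) * (p i + -(1 - s) * z i))).
      { apply (cv_ge _ _ _ (Hcv p (-(1-s)))). intro k.
        assert (D (vscal (1 - s) (y k))) by (apply Dsc; auto; lra).
        specialize (Hd1 _ H). unfold dot in Hd1. erewrite vsum_ext. apply Hd1. intro; unfold vsub, vscal; ring. }
      replace (delta - 2 * s * dot mu z + s * s * dot z z) with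
        (vsum m (fun i => (p i + -(1 - s) * z i) * (p i + -(1 - s) * z i))); auto.
      rewrite <- HA. replace (dot mu mu - 2 * s * dot mu z + s * s * dot z z) with
        (1 * dot mu mu + (- 2 * s) * dot mu z + (s * s) * dot z z) by ring.
      unfold dot. rewrite <- vsum_lin3. apply vsum_ext. intro; unfold mu, vsub; ring. }
    assert (0 <= dot z z) by (apply vsum_nonneg; intro; nra).
    destruct (Rle_lt_dec (dot mu z) 0); auto.
    set (a := dot mu z) in *. set (b := dot z z) in *.
    set (s := Rmin 1 (a / (b + 1))).
    assert (0 < a / (b+1)) by (apply Rdiv_lt_0_compat; lra).
    assert (0 < s <= 1) by (unfold s; split; [apply Rmin_glb_lt; lra | apply Rmin_l]).
    specialize (Ht s H1).
    assert (s * b <= a).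
    { assert (s <= a / (b+1)) by apply Rmin_r.
      assert (a / (b+1) * b <= a).
      { unfold Rdiv. rewrite Rmult_assoc. assert (/ (b+1) * b <= 1).
        { apply (Rmult_le_reg_l (b+1)); [lra|]. rewrite <- Rmult_assoc, Rinv_r by lra. lra. }
        nra. }
      nra. }
    nra. }
  exists mu. split; auto.
  assert (dot mu p = 1 * dot mu z + (-1) * dot mu mu + 0 * dot mu mu).
  { unfold dot. rewrite <- vsum_lin3. apply vsum_ext. intro; unfold mu, vsub; ring. }
  lra.
Qed.

Lemma vsum_scal n a (h : Fin.t n -> R) : vsum n (fun i => a * h i) = a * vsum n h.
Proof. induction n; simpl. ring. rewrite (IHn (fun i => h (Fin.FS i))). ring. Qed.

Lemma dot_nonneg n (v : vec n) : 0 <= dot v v.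
Proof. apply vsum_nonneg. intro; nra. Qed.

Lemma vnorm_lt n (v : vec n) e : 0 < e -> (vnorm v < e <-> dot v v < e * e).
Proof.
  intro He. unfold vnorm. pose proof (dot_nonneg n v). split; intro H0.
  - pose proof (sqrt_sqrt _ H). pose proof (sqrt_pos (dot v v)). nra.
  - rewrite <- (sqrt_square e) by lra. apply sqrt_lt_1_alt. lra.
Qed.

Lemma dot_sum_le n (a b : vec n) : dot (fun i => a i + b i) (fun i => a i + b i) <= 2 * dot a a + 2 * dot b b.
Proof.
  replace (2 * dot a a + 2 * dot b b) with (2 * dot a a + 2 * dot b b + 0 * dot a a) by ring.
  unfold dot. rewrite <- vsum_lin3. apply vsum_le. intro i. pose proof (Rle_0_sqr (a i - b i)). unfold Rsqr in *. lra.
Qed.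

Lemma dot_nonzero n (mu v : vec n) : dot mu v <> 0 -> 0 < dot mu mu.
Proof.
  intro H. destruct (dot_nonneg n mu); auto. exfalso. apply H.
  assert (forall i, mu i = 0).
  { intro i. pose proof (vsum_coord n (fun i => mu i * mu i) (fun i => ltac:(nra)) i). unfold dot in H0. simpl in H1. nra. }
  unfold dot. rewrite <- (vsum_zero n). apply vsum_ext. intro i. rewrite H1. ring.
Qed.

Lemma dot_scal_l n k (a b : vec n) : dot (vscal k a) b = k * dot a b.
Proof. unfold dot. rewrite <- vsum_scal. apply vsum_ext. intro; unfold vscal; ring. Qed.

Lemma dot_scal2 n k (a : vec n) : dot (vscal k a) (vscal k a) = k * k * dot a a.
Proof. unfold dot. rewrite <- vsum_scal. apply vsum_ext. intro; unfold vscal; ring. Qed.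

Lemma normalize n (mu : vec n) : 0 < dot mu mu ->
  exists k, 0 < k /\ dot (vscal k mu) (vscal k mu) = 1 /\ forall y, dot (vscal k mu) y = k * dot mu y.
Proof.
  intro H. exists (/ sqrt (dot mu mu)). pose proof (sqrt_lt_R0 _ H).
  assert (Hs : forall k y, dot (vscal k mu) y = k * dot mu y).
  { intros k y. unfold dot. rewrite <- vsum_scal. apply vsum_ext. intro; unfold vscal; ring. }
  split; [apply Rinv_0_lt_compat; auto|]. split; auto.
  rewrite dot_scal2. set (d := dot mu mu) in *.
  rewrite <- (sqrt_sqrt d) at 3 by lra. field. lra.
Qed.

Lemma dot_opp n (mu v : vec n) : dot mu (vopp v) = - dot mu v.
Proof. replace (- dot mu v) with (-1 * dot mu v) by ring. unfold dot. rewrite <- vsum_scal. apply vsum_ext. intro; unfold vopp; ring. Qed.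

Lemma dot_zero_l n (v : vec n) : dot vzero v = 0.
Proof. unfold dot. rewrite <- (vsum_zero n). apply vsum_ext. intro; unfold vzero; ring. Qed.

Lemma polar_zero n (D : vec n -> Prop) : polar D vzero.
Proof. intros y _. rewrite dot_zero_l. lra. Qed.

Lemma L_infeas m (K : vec m -> Prop) v : is_closed_convex_cone K -> ~ K (vopp v) ->
  exists mu, polar K mu /\ dot mu mu = 1 /\ 0 < dot mu v.
Proof.
  intros [Hcl [K0 [Ksc Kadd]]] Hv.
  assert (He : exists e, 0 < e /\ forall y, K y -> e * e <= dot (vsub y (vopp v)) (vsub y (vopp v))).
  { apply NNPP. intro Hn. apply Hv. apply Hcl. intros e He. apply NNPP. intro Hn2. apply Hn. exists e. split; auto.
    intros y Ky. apply Rnot_lt_le. intro Hlt. apply Hn2. exists y. split; auto. apply vnorm_lt; auto. }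
  destruct He as [e [He Hb]].
  destruct (sep m K (vopp v) (e * e) ltac:(nra) K0 Ksc Kadd) as [mu [Hmu Hp]].
  { intros y Ky. specialize (Hb y Ky). unfold dot in *. erewrite vsum_ext. apply Hb. intro; unfold vsub; ring. }
  rewrite dot_opp in Hp.
  destruct (normalize m mu (dot_nonzero m mu v ltac:(lra))) as [k [Hk [H1 H2]]].
  exists (vscal k mu). split; [|split; auto].
  - intros y Ky. rewrite H2. specialize (Hmu y Ky). apply Rle_ge. nra.
  - rewrite H2. nra.
Qed.

Lemma L_C n (C : vec n -> Prop) c q : is_closed_convex_cone C -> vinterior C c -> (exists y, ~ C y) ->
  ~ vinterior C q -> exists l, polar C l /\ dot l l = 1 /\ dot l q <= 0.
Proof.
  intros [_ [C0 [Csc Cadd]]] [rho [Hrho Hc]] [y0 Hy0] Hq.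
  assert (Hint : forall a b : vec n, dot a a < rho * rho / 4 -> dot b b < rho * rho / 4 ->
                  C (fun i => c i + a i + b i)).
  { intros a b Ha Hb. apply Hc. apply vnorm_lt; auto.
    pose proof (dot_sum_le n a b). unfold dot in *. erewrite vsum_ext. 2:{ intro; unfold vsub; ring_simplify; reflexivity. }
    erewrite vsum_ext. 2:{ intro. instantiate (1 := fun i => (a i + b i) * (a i + b i)). simpl. ring. }
    lra. }
  set (D := fun v => exists y s, C y /\ 0 <= s /\ v = vsub y (vscal s q)).
  destruct (sep n D (vopp c) (rho * rho / 4) ltac:(nra)) as [mu [Hmu Hp]].
  - exists vzero, 0. split; auto. split; [lra|]. apply functional_extensionality; intro; unfold vsub, vscal, vzero; ring.
  - intros a v Ha [y [s [Cy [Hs ->]]]]. exists (vscal a y), (a * s). split; auto. split; [nra|].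
    apply functional_extensionality; intro; unfold vsub, vscal; ring.
  - intros v w [y [s [Cy [Hs ->]]]] [y' [s' [Cy' [Hs' ->]]]]. exists (vadd y y'), (s + s'). split; auto. split; [lra|].
    apply functional_extensionality; intro; unfold vsub, vscal, vadd; ring.
  - intros v [y [s [Cy [Hs ->]]]]. apply Rnot_lt_le. intro Hlt.
    set (w := vsub (vopp c) (vsub y (vscal s q))) in *.
    destruct (Rle_lt_or_eq_dec 0 s Hs) as [Hs0 | Hs0].
    + apply Hq. exists (rho / (2 * s)). split; [apply Rdiv_lt_0_compat; lra|].
      intros z Hz. apply vnorm_lt in Hz; [|apply Rdiv_lt_0_compat; lra].
      assert (Hb : dot (vscal s (vsub z q)) (vscal s (vsub z q)) < rho * rho / 4).
      { rewrite dot_scal2.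
        assert (rho / (2 * s) * (rho / (2 * s)) * (s * s) = rho * rho / 4) by (field; lra).
        assert (0 < s * s) by nra. nra. }
      pose proof (Cadd _ _ Cy (Hint _ _ Hlt Hb)) as H1.
      pose proof (Csc (/ s) _ ltac:(left; apply Rinv_0_lt_compat; lra) H1) as H2.
      replace z with (vscal (/ s) (vadd y (fun i => c i + w i + vscal s (vsub z q) i))); auto.
      apply functional_extensionality; intro; unfold w, vscal, vadd, vsub, vopp. field. lra.
    + subst s. apply Hy0.
      set (dz := dot y0 y0). assert (0 <= dz) by apply dot_nonneg.
      set (eps := rho / (2 * (dz + 1))).
      assert (Heps : 0 < eps) by (apply Rdiv_lt_0_compat; lra).
      assert (Hb : dot (vscal eps y0) (vscal eps y0) < rho * rho / 4).
      { rewrite dot_scal2. fold dz.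
        assert (eps * eps * (dz + 1) * (dz + 1) = rho * rho / 4) by (unfold eps; field; lra).
        assert (0 < eps * eps) by nra. nra. }
      pose proof (Cadd _ _ Cy (Hint _ _ Hlt Hb)) as H1.
      pose proof (Csc (/ eps) _ ltac:(left; apply Rinv_0_lt_compat; lra) H1) as H2.
      replace y0 with (vscal (/ eps) (vadd y (fun i => c i + w i + vscal eps y0 i))); auto.
      apply functional_extensionality; intro; unfold w, vscal, vadd, vsub, vopp. field. lra.
  - assert (Hpol : forall y, C y -> 0 <= dot mu y).
    { intros y Cy. apply Hmu. exists y, 0. split; auto. split; [lra|].
      apply functional_extensionality; intro; unfold vsub, vscal; ring. }
    assert (Hqq : 0 <= dot mu (vopp q)).
    { apply Hmu. exists vzero, 1. split; auto. split; [lra|].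
      apply functional_extensionality; intro; unfold vsub, vscal, vzero, vopp; ring. }
    rewrite dot_opp in Hp, Hqq.
    destruct (normalize n mu (dot_nonzero n mu c ltac:(lra))) as [k [Hk [H1 H2]]].
    exists (vscal k mu). split; [|split; auto].
    + intros y Cy. rewrite H2. specialize (Hpol y Cy). apply Rle_ge. nra.
    + rewrite H2. nra.
Qed.

Theorem mainTheorem10 (s n m : nat) (X : vec s -> Prop) (f : vec s -> vec n)
  (g : vec s -> vec m) (C : vec n -> Prop) (K : vec m -> Prop)
  (xbar : vec s) (F : vec s -> R) :
  is_open X ->
  is_closed_convex_cone C -> is_closed_convex_cone K ->
  (exists c : vec n, vinterior C c) -> (exists y : vec n, ~ C y) ->
  is_F X f g C K xbar F ->
  weak_local_min X f g C K xbar ->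
  (forall u, dini1_ge F xbar u 0) /\
  in_lower_subdiff1 F xbar (fun _ => 0) /\
  (forall u, dini2_ge F xbar u 0).
Proof.
  intros HX HC HK [c Hc] Hy0 HF [Hfeas [d [Hd Hloc]]].
  destruct (HX xbar (proj1 Hfeas)) as [eX [HeX HXb]].
  set (rho := Rmin eX d).
  assert (Hrho : 0 < rho) by (apply Rmin_glb_lt; lra).
  assert (Hnear : forall x, dot (vsub x xbar) (vsub x xbar) < rho * rho -> 0 <= F x).
  { intros x Hx. apply vnorm_lt in Hx; auto.
    assert (HXx : X x). { apply HXb. pose proof (Rmin_l eX d). fold rho in H. lra. }
    destruct (HF x HXx) as [_ Hmax].
    destruct (classic (K (vopp (g x)))) as [Kx | Kx].
    - assert (Hni : ~ vinterior C (vsub (f xbar) (f x))).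
      { apply Hloc. pose proof (Rmin_r eX d) as Hm. fold rho in Hm. lra. split; auto. }
      destruct (L_C n C c _ HC Hc Hy0 Hni) as [l [Hl [Hll Hlq]]].
      assert (Hw : exists l0 mu, Lambda C K l0 mu /\
                 - dot l (vsub (f xbar) (f x)) = dot l0 (vsub (f x) (f xbar)) + dot mu (g x)).
      { exists l, vzero. split. split; auto. split. apply polar_zero. rewrite dot_zero_l. lra.
        rewrite dot_zero_l. replace (- dot l (vsub (f xbar) (f x))) with (-1 * dot l (vsub (f xbar) (f x))) by ring.
        unfold dot. rewrite <- vsum_scal. rewrite Rplus_0_r. apply vsum_ext. intro; unfold vsub; ring. }
      specialize (Hmax _ Hw). lra.
    - destruct (L_infeas m K (g x) HK Kx) as [mu [Hmu [Hmm Hmg]]].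
      assert (Hw : exists l0 mu0, Lambda C K l0 mu0 /\
                 dot mu (g x) = dot l0 (vsub (f x) (f xbar)) + dot mu0 (g x)).
      { exists vzero, mu. split. split. apply polar_zero. split; auto. rewrite dot_zero_l. lra.
        rewrite dot_zero_l. ring. }
      specialize (Hmax _ Hw). lra. }
  assert (HF0 : F xbar <= 0).
  { destruct (HF xbar (proj1 Hfeas)) as [[l [mu [[Hl [Hmu _]] Heq]]] _].
    rewrite Heq. assert (dot l (vsub (f xbar) (f xbar)) = 0).
    { unfold dot. rewrite <- (vsum_zero n). apply vsum_ext. intro; unfold vsub; ring. }
    specialize (Hmu _ (proj2 Hfeas)). rewrite dot_opp in Hmu. lra. }
  assert (Hkey : forall u, exists del, 0 < del /\ forall t u', 0 < t < del -> vnorm (vsub u' u) < del ->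
                   0 <= F (vadd xbar (vscal t u')) - F xbar).
  { intro u. set (r1 := Rmin rho 1). set (U := dot u u).
    assert (Hr1 : 0 < r1) by (apply Rmin_glb_lt; lra).
    assert (Hr1' : r1 <= rho) by apply Rmin_l. assert (Hr1'' : r1 <= 1) by apply Rmin_r.
    assert (HU : 0 <= U) by apply dot_nonneg.
    exists (r1 / (2 + 2 * U)). split. apply Rdiv_lt_0_compat; lra.
    intros t u' Ht Hu'. set (del := r1 / (2 + 2 * U)) in *.
    assert (Hdel : 0 < del) by (apply Rdiv_lt_0_compat; lra).
    apply vnorm_lt in Hu'; auto.
    assert (Hdel1 : del * (2 + 2 * U) = r1) by (unfold del; field; lra).
    assert (Hdel2 : del <= r1 / 2).
    { apply (Rmult_le_reg_r (2 + 2 * U)); [lra|]. rewrite Hdel1. nra. }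
    assert (Hu2 : dot u' u' <= 2 * dot (vsub u' u) (vsub u' u) + 2 * U).
    { pose proof (dot_sum_le s (vsub u' u) u). unfold dot in *. erewrite vsum_ext. apply H. intro; unfold vsub; simpl; ring. }
    assert (Hx : dot (vsub (vadd xbar (vscal t u')) xbar) (vsub (vadd xbar (vscal t u')) xbar) = t * t * dot u' u').
    { rewrite <- dot_scal2. unfold dot. apply vsum_ext. intro; unfold vsub, vadd, vscal; ring. }
    assert (0 <= dot u' u') by apply dot_nonneg.
    assert (dot u' u' < 2 * (del * del) + 2 * U) by lra.
    assert (t * t * dot u' u' <= del * del * dot u' u') by (apply Rmult_le_compat_r; nra).
    assert (del * del * dot u' u' <= del * del * (2 * (del * del) + 2 * U)) by (apply Rmult_le_compat_l; nra).
    assert (del <= 1/2) by lra.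
    assert (del * del * (2 * (del * del) + 2 * U) <= del * (del * (2 + 2 * U))).
    { assert (0 <= del * del * (1 - del * del)) by (apply Rmult_le_pos; nra).
      replace (del * (del * (2 + 2 * U))) with (del * del * (2 * (del * del) + 2 * U) + 2 * (del * del * (1 - del * del))) by ring.
      lra. }
    rewrite Hdel1 in *.
    assert (del * r1 < rho * rho).
    { assert (del * r1 <= r1 * r1 / 2) by nra. assert (r1 * r1 <= rho * rho) by nra. nra. }
    specialize (Hnear (vadd xbar (vscal t u')) ltac:(lra)). lra. }
  assert (H1 : forall u, dini1_ge F xbar u 0).
  { intros u e He. destruct (Hkey u) as [del [Hdel Hk]]. exists del. split; auto.
    intros t u' Ht Hu'. specialize (Hk t u' Ht Hu'). unfold dini1_quot.
    assert (0 <= (F (vadd xbar (vscal t u')) - F xbar) / t) by (unfold Rdiv; apply Rmult_le_pos; [lra | left; apply Rinv_0_lt_compat; lra]). lra. }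
  split; auto. split.
  - split; auto. split; intros; ring.
  - intros u e He. destruct (Hkey u) as [del [Hdel Hk]]. exists del. split; auto.
    intros t u' Ht Hu'. specialize (Hk t u' Ht Hu'). unfold dini2_quot.
    assert (0 <= 2 * (F (vadd xbar (vscal t u')) - F xbar) / (t * t)) by (unfold Rdiv; apply Rmult_le_pos; [lra | left; apply Rinv_0_lt_compat; nra]). lra.
Qed.
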